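(* In the Ornstein–Uhlenbeck setting described in the context, regard the optimal intervention boundaries as functions $a^*(\theta)$, $b^*(\theta)$ of the reference target $\theta$, all other parameters $(r,\rho,m,\sigma,c_1,c_2)$ being fixed. Then $\theta\mapsto a^*(\theta)$ and $\theta\mapsto b^*(\theta)$ are both increasing.
   Context: Fix parameters $r>0$, $\rho>0$, $m\in\mathbb{R}$, $\sigma>0$, a reference target $\theta$ (the logarithm of the central parity) and constants $c_1,c_2\in\mathbb{R}$ with $c_1+c_2>0$. The (log-)exchange rate controlled by $\nu=\xi-\eta$ (difference of two nondecreasing adapted left-continuous processes started at $0$, with increments on disjoint sets) evolves as $dX_t=\rho(m-X_t)dt+\sigma dB_t+d\xi_t-d\eta_t$, $X_0=x\in\mathbb{R}$, where $B$ is a Brownian motion. The central bank minimizes over admissible controls $\mathbb{E}_x[\int_0^\infty e^{-rs}\tfrac12(X_s-\theta)^2ds+c_1\int_0^\infty e^{-rs}d\xi_s+c_2\int_0^\infty e^{-rs}d\eta_s]$ (jumps included). Let $D_\alpha(y)=\frac{e^{-y^2/4}}{\Gamma(-\alpha)}\int_0^\infty t^{-\alpha-1}e^{-t^2/2-yt}dt$ ($\alpha<0$), $\widehat\phi(x)=e^{\rho(x-m)^2/(2\sigma^2)}D_{-(r+\rho)/\rho}\big(\tfrac{(x-m)\sqrt{2\rho}}{\sigma}\big)$, $\widehat\psi(x)=e^{\rho(x-m)^2/(2\sigma^2)}D_{-(r+\rho)/\rho}\big(-\tfrac{(x-m)\sqrt{2\rho}}{\sigma}\big)$, $\widehat m'(z)=\frac{2}{\sigma^2}e^{-\rho(z-m)^2/\sigma^2}$.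 The optimal intervention boundaries $a^*<b^*$ are the unique pair with $a^*<\theta-(r+\rho)c_1$ and $b^*>\theta+(r+\rho)c_2$ solving $\int_a^b(z-\theta+(r+\rho)c_1)\widehat m'\widehat\phi\,dz=-(r+\rho)(c_1+c_2)\int_b^\infty\widehat m'\widehat\phi\,dz$ and $\int_a^b(z-\theta-(r+\rho)c_2)\widehat m'\widehat\psi\,dz=(r+\rho)(c_1+c_2)\int_{-\infty}^a\widehat m'\widehat\psi\,dz$; the optimal policy keeps $X$ in $[a^*,b^*]$ by minimal reflection. *)

(* Defs.v *)
From Stdlib Require Import Reals.
From Coquelicot Require Import Coquelicot.
Open Scope R_scope.

Definition Gamma_fn (s : R) : R :=
  RInt_gen (fun t => Rpower t (s - 1) * exp (- t)) (at_right 0) (Rbar_locally p_infty).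

(* Parabolic cylinder function, integral representation for alpha < 0:
   D_alpha(y) = e^{-y^2/4}/Gamma(-alpha) * int_0^oo t^{-alpha-1} e^{-t^2/2 - y t} dt *)
Definition parabD (alpha y : R) : R :=
  exp (- y ^ 2 / 4) / Gamma_fn (- alpha) *
  RInt_gen (fun t => Rpower t (- alpha - 1) * exp (- t ^ 2 / 2 - y * t))
           (at_right 0) (Rbar_locally p_infty).

Definition phi_hat (r rho m sigma x : R) : R :=
  exp (rho * (x - m) ^ 2 / (2 * sigma ^ 2)) *
  parabD (- (r + rho) / rho) ((x - m) * sqrt (2 * rho) / sigma).

Definition psi_hat (r rho m sigma x : R) : R :=
  exp (rho * (x - m) ^ 2 / (2 * sigma ^ 2)) *
  parabD (- (r + rho) / rho) (- ((x - m) * sqrt (2 * rho) / sigma)).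

(* density of the speed measure: m'(z) = 2/sigma^2 e^{-rho (z-m)^2/sigma^2} *)
Definition m_hat' (rho m sigma z : R) : R :=
  2 / sigma ^ 2 * exp (- rho * (z - m) ^ 2 / sigma ^ 2).

Definition optimal_boundaries (r rho m sigma c1 c2 theta a b : R) : Prop :=
  a < b /\
  a < theta - (r + rho) * c1 /\
  b > theta + (r + rho) * c2 /\
  RInt (fun z => (z - theta + (r + rho) * c1) * m_hat' rho m sigma z
                   * phi_hat r rho m sigma z) a b
  = - (r + rho) * (c1 + c2) *
    RInt_gen (fun z => m_hat' rho m sigma z * phi_hat r rho m sigma z)
             (at_point b) (Rbar_locally p_infty) /\
  RInt (fun z => (z - theta - (r + rho) * c2) * m_hat' rho m sigma z
                   * psi_hat r rho m sigma z) a b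
  = (r + rho) * (c1 + c2) *
    RInt_gen (fun z => m_hat' rho m sigma z * psi_hat r rho m sigma z)
             (Rbar_locally m_infty) (at_point a).

(* Main.v *)
Require Import Defs.
From Stdlib Require Import Reals Lra.
From Coquelicot Require Import Coquelicot.
Open Scope R_scope.

Lemma ball_norm_R (y x eps : R) : Rabs (x - y) < eps -> ball_norm y eps x.
Proof. intro H. unfold ball_norm, norm, minus, plus, opp; simpl. unfold abs; simpl. exact H. Qed.

Lemma lim_gen (G : (R -> Prop) -> Prop) {FG : Filter G} (F : R -> R) (l : R) :
  G (fun x => F x <= l) ->
  (forall eps : posreal, exists x0, l - eps < F x0 /\ G (fun x => F x0 <= F x)) ->
  filterlim F G (locally l).
Proof.
  intros H1 H2. apply <- (filterlim_locally_ball_norm (K := R_AbsRing) (U := R_NormedModule) (F := G)). intros eps.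
  destruct (H2 eps) as [x0 [Hx0 HG]].
  apply filter_imp with (fun x => F x <= l /\ F x0 <= F x).
  - intros x [Ha Hb]. apply ball_norm_R. apply Rabs_def1; lra.
  - apply filter_and; auto.
Qed.

Lemma sup_exists (E : R -> Prop) (B : R) (x0 : R) :
  E x0 -> (forall v, E v -> v <= B) ->
  exists l, (forall v, E v -> v <= l) /\ (forall eps : posreal, exists v, E v /\ l - eps < v).
Proof.
  intros H0 HB.
  destruct (completeness E) as [l [Hub Hlub]].
  - exists B. intros v Hv. apply HB; auto.
  - exists x0; auto.
  - exists l. split.
    + intros v Hv. apply Hub; auto.
    + intros eps. apply Classical_Prop.NNPP. intro Hn.
      assert (l <= l - eps). { apply Hlub. intros v Hv.
        destruct (Rle_lt_dec v (l - eps)) as [h|h]; auto. exfalso; apply Hn; exists v; auto. }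
      destruct eps; simpl in *; lra.
Qed.

Lemma mono_pinfty (F : R -> R) (c B : R) :
  (forall x y, c <= x <= y -> F x <= F y) -> (forall x, c <= x -> F x <= B) ->
  exists l, filterlim F (Rbar_locally p_infty) (locally l).
Proof.
  intros Hm Hb.
  destruct (sup_exists (fun v => exists x, c <= x /\ v = F x) B (F c)) as [l [H1 H2]].
  - exists c; split; [lra|auto].
  - intros v [x [Hx ->]]; auto.
  - exists l. apply lim_gen; [typeclasses eauto| |].
    + simpl. exists c. intros x Hx. apply H1. exists x; split; [lra|auto].
    + intros eps. destruct (H2 eps) as [v [[x [Hx ->]] Hv]].
      exists x; split; auto. simpl. exists x. intros y Hy. apply Hm; lra.
Qed.

Lemma mono_minfty (F : R -> R) (c B : R) :
  (forall x y, x <= y <= c -> F y <= F x) -> (forall x, x <= c -> F x <= B) ->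
  exists l, filterlim F (Rbar_locally m_infty) (locally l).
Proof.
  intros Hm Hb.
  destruct (sup_exists (fun v => exists x, x <= c /\ v = F x) B (F c)) as [l [H1 H2]].
  - exists c; split; [lra|auto].
  - intros v [x [Hx ->]]; auto.
  - exists l. apply lim_gen; [typeclasses eauto| |].
    + simpl. exists c. intros x Hx. apply H1. exists x; split; [lra|auto].
    + intros eps. destruct (H2 eps) as [v [[x [Hx ->]] Hv]].
      exists x; split; auto. simpl. exists x. intros y Hy. apply Hm; lra.
Qed.

Lemma mono_right0 (F : R -> R) (c B : R) : 0 < c ->
  (forall x y, 0 < x -> x <= y -> y <= c -> F y <= F x) -> (forall x, 0 < x <= c -> F x <= B) ->
  exists l, filterlim F (at_right 0) (locally l).
Proof.
  intros Hc Hm Hb.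
  destruct (sup_exists (fun v => exists x, 0 < x <= c /\ v = F x) B (F c)) as [l [H1 H2]].
  - exists c; split; [lra|auto].
  - intros v [x [Hx ->]]; auto.
  - exists l. apply lim_gen; [typeclasses eauto| |].
    + exists (mkposreal c Hc). intros x Hx Hx0. apply H1. exists x; split; auto.
      unfold ball in Hx; simpl in Hx; unfold AbsRing_ball, abs, minus, plus, opp in Hx; simpl in Hx.
      apply Rabs_def2 in Hx. lra.
    + intros eps. destruct (H2 eps) as [v [[x [Hx ->]] Hv]].
      exists x; split; auto. exists (mkposreal x (proj1 Hx)). intros y Hy Hy0. apply Hm; auto.
      unfold ball in Hy; simpl in Hy; unfold AbsRing_ball, abs, minus, plus, opp in Hy; simpl in Hy.
      apply Rabs_def2 in Hy. simpl in Hx. lra. lra.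
Qed.

Lemma isRIntgen_of_lim {Fa Fb : (R -> Prop) -> Prop} {HFa : Filter Fa} {HFb : Filter Fb}
  (f : R -> R) (l : R) :
  filter_prod Fa Fb (fun ab => ex_RInt f (fst ab) (snd ab)) ->
  filterlim (fun ab => RInt f (fst ab) (snd ab)) (filter_prod Fa Fb) (locally l) ->
  is_RInt_gen f Fa Fb l.
Proof.
  intros Hex Hlim P HP. unfold filtermapi.
  apply filter_imp with (fun ab => ex_RInt f (fst ab) (snd ab) /\ P (RInt f (fst ab) (snd ab))).
  - intros ab [H1 H2]. exists (RInt f (fst ab) (snd ab)); split; [apply (RInt_correct (V:=R_CompleteNormedModule)); exact H1 | exact H2].
  - apply filter_and; auto. apply Hlim; auto.
Qed.

Lemma RIntgen_ge {Fa Fb : (R -> Prop) -> Prop} {HFa : ProperFilter Fa} {HFb : ProperFilter Fb}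
  (f : R -> R) (l c : R) :
  is_RInt_gen f Fa Fb l ->
  filter_prod Fa Fb (fun ab => forall y, is_RInt f (fst ab) (snd ab) y -> c <= y) -> c <= l.
Proof.
  intros H Hc. destruct (Rle_lt_dec c l) as [h|h]; auto. exfalso.
  assert (He : 0 < (c - l) / 2) by lra.
  specialize (H (ball l (mkposreal _ He)) (locally_ball _ _)).
  unfold filtermapi in H.
  assert (HP : ProperFilter (filter_prod Fa Fb)) by (apply filter_prod_proper; auto).
  destruct (filter_ex _ (filter_and _ _ H Hc)) as [ab [[y [Hy1 Hy2]] Hy3]].
  specialize (Hy3 y Hy1).
  unfold ball in Hy2; simpl in Hy2; unfold AbsRing_ball, abs, minus, plus, opp in Hy2; simpl in Hy2.
  apply Rabs_def2 in Hy2. lra.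
Qed.

Lemma exp_le (x y : R) : x <= y -> exp x <= exp y.
Proof. intros [h|h]. left; apply exp_increasing; auto. right; subst; auto. Qed.

Lemma exd_cont (f : R -> R) (x : R) : ex_derive f x -> continuous f x.
Proof. intro H. apply (ex_derive_continuous (K := R_AbsRing) (V := R_NormedModule)). exact H. Qed.

Lemma cont_expl (C mu z : R) : continuous (fun z => C * exp (- mu * z)) z.
Proof. apply exd_cont. auto_derive. auto. Qed.

Lemma RInt_expl (C mu a x : R) : mu <> 0 ->
  RInt (fun z => C * exp (- mu * z)) a x = C / mu * (exp (- mu * a) - exp (- mu * x)).
Proof.
  intro Hmu. apply is_RInt_unique.
  replace (C / mu * (exp (- mu * a) - exp (- mu * x))) with
    (minus ((fun z => - C / mu * exp (- mu * z)) x) ((fun z => - C / mu * exp (- mu * z)) a)).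
  2:{ unfold minus, plus, opp; simpl. field. auto. }
  apply (is_RInt_derive (V := R_CompleteNormedModule) (fun z => - C / mu * exp (- mu * z)) (fun z => C * exp (- mu * z))).
  - intros z _. auto_derive; auto. field; auto.
  - intros z _. apply cont_expl.
Qed.

Lemma Rplus_plus (x y : R) : plus x y = x + y.
Proof. reflexivity. Qed.

Lemma lim_prod_pt_r (b : R) (G : (R -> Prop) -> Prop) (F : R -> R -> R) (l : R) :
  filterlim (fun y => F b y) G (locally l) ->
  filterlim (fun ab => F (fst ab) (snd ab)) (filter_prod (at_point b) G) (locally l).
Proof.
  intros H P HP. specialize (H P HP).
  apply (Filter_prod _ _ _ (fun x => x = b) (fun y => P (F b y))); auto.
  - reflexivity.
  - intros x y -> Hy. exact Hy.
Qed.

Lemma lim_prod_pt_l (a : R) (G : (R -> Prop) -> Prop) (F : R -> R -> R) (l : R) :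
  filterlim (fun x => F x a) G (locally l) ->
  filterlim (fun ab => F (fst ab) (snd ab)) (filter_prod G (at_point a)) (locally l).
Proof.
  intros H P HP. specialize (H P HP).
  apply (Filter_prod _ _ _ (fun x => P (F x a)) (fun y => y = a)); auto.
  - reflexivity.
  - intros x y Hx ->. exact Hx.
Qed.

Lemma exRInt_cont (f : R -> R) a b : (forall z, Rmin a b <= z <= Rmax a b -> continuous f z) -> ex_RInt f a b.
Proof. intro H. apply (ex_RInt_continuous (V := R_CompleteNormedModule)). exact H. Qed.

Lemma exRInt_on (f : R -> R) (D : R -> Prop) x y :
  (forall z, D z -> continuous f z) ->
  (forall z, Rmin x y <= z <= Rmax x y -> D z) -> ex_RInt f x y.
Proof. intros Hc HD. apply exRInt_cont. intros z Hz. apply Hc, HD; auto. Qed.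

Lemma IGR (f : R -> R) (b C mu : R) : 0 < mu ->
  (forall z, b <= z -> continuous f z) ->
  (forall z, b <= z -> 0 <= f z <= C * exp (- mu * z)) ->
  exists l, is_RInt_gen f (at_point b) (Rbar_locally p_infty) l.
Proof.
  intros Hmu Hc Hb.
  assert (HC : 0 <= C).
  { destruct (Hb b (Rle_refl _)) as [h1 h2].
    destruct (Rle_lt_dec 0 C) as [h|h]; auto.
    assert (C * exp (- mu * b) < 0). { apply Rmult_neg_pos; auto. apply exp_pos. } lra. }
  assert (Hex : forall x y, b <= x -> b <= y -> ex_RInt f x y).
  { intros x y Hx Hy. apply (exRInt_on f (fun z => b <= z)); auto.
    intros z [Hz _]. revert Hz. apply Rmin_case_strong; intros; lra. }
  destruct (mono_pinfty (fun x => RInt f b x) b (C / mu * exp (- mu * b))) as [l Hl].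
  - intros x y [Hx Hy].
    rewrite <- (RInt_Chasles f b x y); try (apply Hex; lra).
    rewrite Rplus_plus.
    assert (0 <= RInt f x y). { apply RInt_ge_0; auto. apply Hex; lra.
      intros z Hz; apply Hb; lra. }
    lra.
  - intros x Hx.
    apply Rle_trans with (RInt (fun z => C * exp (- mu * z)) b x).
    + apply RInt_le; auto. apply Hex; lra.
      apply exRInt_cont. intros; apply cont_expl.
      intros z Hz; apply Hb; lra.
    + rewrite RInt_expl; [|lra].
      assert (0 <= C / mu * exp (- mu * x)).
      { apply Rmult_le_pos; [apply Rmult_le_pos; [auto| left; apply Rinv_0_lt_compat; auto]| left; apply exp_pos]. }
      lra.
  - exists l. apply isRIntgen_of_lim.
    + apply (Filter_prod _ _ _ (fun x => x = b) (fun y => b < y)).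
      * reflexivity.
      * simpl. exists b. auto.
      * intros x y -> Hy. simpl. apply Hex; lra.
    + apply (lim_prod_pt_r b _ (fun x y => RInt f x y)). exact Hl.
Qed.

Lemma IGL (f : R -> R) (a C mu : R) : 0 < mu ->
  (forall z, z <= a -> continuous f z) ->
  (forall z, z <= a -> 0 <= f z <= C * exp (- (- mu) * z)) ->
  exists l, is_RInt_gen f (Rbar_locally m_infty) (at_point a) l.
Proof.
  intros Hmu Hc Hb.
  assert (HC : 0 <= C).
  { destruct (Hb a (Rle_refl _)) as [h1 h2].
    destruct (Rle_lt_dec 0 C) as [h|h]; auto.
    assert (C * exp (- - mu * a) < 0). { apply Rmult_neg_pos; auto. apply exp_pos. } lra. }
  assert (Hex : forall x y, x <= a -> y <= a -> ex_RInt f x y).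
  { intros x y Hx Hy. apply (exRInt_on f (fun z => z <= a)); auto.
    intros z [_ Hz]. revert Hz. apply Rmax_case_strong; intros; lra. }
  destruct (mono_minfty (fun x => RInt f x a) a (C / mu * exp (mu * a))) as [l Hl].
  - intros x y [Hx Hy].
    rewrite <- (RInt_Chasles f x y a); try (apply Hex; lra).
    rewrite Rplus_plus.
    assert (0 <= RInt f x y). { apply RInt_ge_0; auto. apply Hex; lra.
      intros z Hz; apply Hb; lra. }
    lra.
  - intros x Hx.
    apply Rle_trans with (RInt (fun z => C * exp (- - mu * z)) x a).
    + apply RInt_le; auto. apply Hex; lra.
      apply exRInt_cont. intros; apply cont_expl.
      intros z Hz; apply Hb; lra.
    + rewrite RInt_expl; [|lra].
      assert (0 <= C / mu * exp (mu * x)).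
      { apply Rmult_le_pos; [apply Rmult_le_pos; [auto| left; apply Rinv_0_lt_compat; auto]| left; apply exp_pos]. }
      replace (C / - mu * (exp (- - mu * x) - exp (- - mu * a))) with
        (C / mu * exp (mu * a) - C / mu * exp (mu * x)).
      lra. replace (- - mu) with mu by ring. field. lra.
  - exists l. apply isRIntgen_of_lim.
    + apply (Filter_prod _ _ _ (fun x => x < a) (fun y => y = a)).
      * simpl. exists a. auto.
      * reflexivity.
      * intros x y Hx ->. simpl. apply Hex; lra.
    + apply (lim_prod_pt_l a _ (fun x y => RInt f x y)). exact Hl.
Qed.

Lemma IG0 (f : R -> R) (C : R) :
  (forall z, 0 < z -> continuous f z) ->
  (forall z, 0 < z -> z <= 1 -> 0 <= f z <= C) ->
  exists l, is_RInt_gen f (at_right 0) (at_point 1) l.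
Proof.
  intros Hc Hb.
  assert (Hex : forall x y, 0 < x -> 0 < y -> ex_RInt f x y).
  { intros x y Hx Hy. apply (exRInt_on f (fun z => 0 < z)); auto.
    intros z [Hz _]. revert Hz. apply Rmin_case_strong; intros; lra. }
  assert (HC : 0 <= C). { destruct (Hb 1); lra. }
  destruct (mono_right0 (fun x => RInt f x 1) 1 C) as [l Hl]; [lra| | |].
  - intros x y Hx Hxy Hy1.
    rewrite <- (RInt_Chasles f x y 1); try (apply Hex; lra).
    rewrite Rplus_plus.
    assert (0 <= RInt f x y). { apply RInt_ge_0; auto. apply Hex; lra.
      intros z Hz; apply Hb; lra. }
    lra.
  - intros x [Hx Hx1].
    apply Rle_trans with (RInt (fun _ => C) x 1).
    + apply RInt_le; auto. apply Hex; lra.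
      apply ex_RInt_const.
      intros z Hz; apply Hb; lra.
    + rewrite RInt_const. unfold scal; simpl. unfold mult; simpl. nra.
  - exists l. apply isRIntgen_of_lim.
    + apply (Filter_prod _ _ _ (fun x => 0 < x) (fun y => y = 1)).
      * exists (mkposreal 1 Rlt_0_1). intros; auto.
      * reflexivity.
      * intros x y Hx ->. simpl. apply Hex; lra.
    + apply (lim_prod_pt_l 1 _ (fun x y => RInt f x y)). exact Hl.
Qed.

Lemma IG (f : R -> R) (C mu : R) : 0 < mu ->
  (forall z, 0 < z -> continuous f z) ->
  (forall z, 0 < z -> 0 <= f z <= C * exp (- mu * z)) ->
  exists l, is_RInt_gen f (at_right 0) (Rbar_locally p_infty) l.
Proof.
  intros Hmu Hc Hb.
  assert (HC : 0 <= C).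
  { destruct (Hb 1 Rlt_0_1) as [h1 h2].
    destruct (Rle_lt_dec 0 C) as [h|h]; auto.
    assert (C * exp (- mu * 1) < 0). { apply Rmult_neg_pos; auto. apply exp_pos. } lra. }
  destruct (IG0 f C) as [l0 H0]; auto.
  { intros z Hz Hz1. destruct (Hb z Hz) as [Ha Hb']. split; auto.
    apply Rle_trans with (1 := Hb'). rewrite <- (Rmult_1_r C) at 2.
    apply Rmult_le_compat_l; auto. rewrite <- exp_0. apply exp_le. nra. }
  destruct (IGR f 1 C mu) as [l1 H1]; auto.
  { intros z Hz; apply Hc; lra. }
  { intros z Hz; apply Hb; lra. }
  exists (plus l0 l1). apply (is_RInt_gen_Chasles f 1); auto.
Qed.

Lemma cont_plusR (f g : R -> R) z : continuous f z -> continuous g z -> continuous (fun z => f z + g z) z.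
Proof. intros H1 H2. apply (continuous_plus (V := R_NormedModule) f g z H1 H2). Qed.
Lemma cont_multR (f g : R -> R) z : continuous f z -> continuous g z -> continuous (fun z => f z * g z) z.
Proof. intros H1 H2. apply (continuous_mult (K := R_AbsRing) f g z H1 H2). Qed.
Lemma cont_constR (c : R) (z : R) : continuous (fun _ : R => c) z.
Proof. apply (continuous_const (U := R_UniformSpace) (V := R_UniformSpace)). Qed.
Lemma cont_idR z : continuous (fun z : R => z) z.
Proof. apply (continuous_id (U := R_UniformSpace)). Qed.
Lemma cont_compR (f g : R -> R) z : continuous f z -> continuous g (f z) -> continuous (fun z => g (f z)) z.
Proof. intros H1 H2. apply (continuous_comp (U := R_UniformSpace) (V := R_UniformSpace) (W := R_UniformSpace) f g z H1 H2). Qed.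
Lemma cont_extR (f g : R -> R) z : (forall x, f x = g x) -> continuous f z -> continuous g z.
Proof. intros H1 H2. apply (continuous_ext (T := R_UniformSpace) (U := R_UniformSpace) f g z H1 H2). Qed.

Lemma RInt_lin2 (f g : R -> R) (c1 c2 x y : R) : ex_RInt f x y -> ex_RInt g x y ->
  RInt (fun z => c1 * f z + c2 * g z) x y = c1 * RInt f x y + c2 * RInt g x y.
Proof.
  intros Hf Hg.
  rewrite (RInt_ext (V := R_CompleteNormedModule) _ (fun z => plus (scal c1 (f z)) (scal c2 (g z)))).
  2:{ intros; reflexivity. }
  rewrite (RInt_plus (V := R_CompleteNormedModule)).
  2: apply (ex_RInt_scal (V := R_NormedModule)); auto.
  2: apply (ex_RInt_scal (V := R_NormedModule)); auto.
  rewrite !(RInt_scal (V := R_CompleteNormedModule)); auto.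
Qed.

Definition W (f : R -> R) (x : R) := RInt f 0 x.

Lemma exRInt_all (f : R -> R) x y : (forall z, continuous f z) -> ex_RInt f x y.
Proof. intro H. apply exRInt_cont. intros; auto. Qed.

Lemma RInt_W (f : R -> R) x y : (forall z, continuous f z) -> RInt f x y = W f y - W f x.
Proof.
  intro H. unfold W. rewrite <- (RInt_Chasles (V := R_CompleteNormedModule) f 0 x y); try apply exRInt_all; auto.
  rewrite Rplus_plus. simpl. lra.
Qed.

Lemma RInt_extR (f g : R -> R) (a b : R) : (forall x, f x = g x) -> RInt f a b = RInt g a b.
Proof. intro H. apply (RInt_ext (V := R_CompleteNormedModule)). intros; apply H. Qed.

Lemma cont_zf (f : R -> R) : (forall z, continuous f z) -> forall z, continuous (fun z => z * f z) z.
Proof. intros H z. apply cont_multR; auto. apply cont_idR. Qed.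

Lemma RInt_comb (p q : R -> R) (A B u v x y : R) :
  (forall z, continuous p z) -> (forall z, continuous q z) ->
  RInt (fun z => (u * z + v) * (A * p z + B * q z)) x y =
  A * (u * (W (fun z => z * p z) y - W (fun z => z * p z) x) + v * (W p y - W p x)) +
  B * (u * (W (fun z => z * q z) y - W (fun z => z * q z) x) + v * (W q y - W q x)).
Proof.
  intros Hp Hq.
  assert (Hzp := cont_zf p Hp). assert (Hzq := cont_zf q Hq).
  rewrite (RInt_extR _
    (fun z => 1 * ((A * u) * (z * p z) + (A * v) * p z) + 1 * ((B * u) * (z * q z) + (B * v) * q z))).
  2:{ intros; ring. }
  rewrite RInt_lin2.
  2:{ apply exRInt_all. intro z. apply cont_plusR; apply cont_multR; auto; apply cont_constR. }
  2:{ apply exRInt_all. intro z. apply cont_plusR; apply cont_multR; auto; apply cont_constR. }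
  rewrite !RInt_lin2; try (apply exRInt_all; auto).
  rewrite !(RInt_W p), !(RInt_W q), !(RInt_W (fun z => z * p z)), !(RInt_W (fun z => z * q z)); auto.
  simpl. ring.
Qed.

Lemma cont_comb (p q : R -> R) (A B u v : R) :
  (forall z, continuous p z) -> (forall z, continuous q z) ->
  forall z, continuous (fun z => (u * z + v) * (A * p z + B * q z)) z.
Proof.
  intros Hp Hq z.
  apply cont_multR. apply cont_plusR. apply cont_multR. apply cont_constR. apply cont_idR. apply cont_constR.
  apply cont_plusR; apply cont_multR; auto; apply cont_constR.
Qed.

Lemma sgn_le (p q : R -> R) (A B u v x y : R) :
  (forall z, continuous p z) -> (forall z, continuous q z) -> x <= y ->
  (forall z, x < z < y -> 0 <= (u * z + v) * (A * p z + B * q z)) ->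
  0 <= A * (u * (W (fun z => z * p z) y - W (fun z => z * p z) x) + v * (W p y - W p x)) +
  B * (u * (W (fun z => z * q z) y - W (fun z => z * q z) x) + v * (W q y - W q x)).
Proof.
  intros Hp Hq Hxy H. rewrite <- RInt_comb; auto.
  apply RInt_ge_0; auto. apply exRInt_all. apply cont_comb; auto.
Qed.

Lemma sgn_lt (p q : R -> R) (A B u v x y : R) :
  (forall z, continuous p z) -> (forall z, continuous q z) -> x < y ->
  (forall z, x < z < y -> 0 < (u * z + v) * (A * p z + B * q z)) ->
  0 < A * (u * (W (fun z => z * p z) y - W (fun z => z * p z) x) + v * (W p y - W p x)) +
  B * (u * (W (fun z => z * q z) y - W (fun z => z * q z) x) + v * (W q y - W q x)).
Proof.
  intros Hp Hq Hxy H. rewrite <- RInt_comb; auto.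
  apply RInt_gt_0; auto. intros; apply cont_comb; auto.
Qed.

Lemma tailP (p : R -> R) (x y : R) : (forall z, continuous p z) ->
  ex_RInt_gen p (at_point y) (Rbar_locally p_infty) ->
  RInt_gen p (at_point x) (Rbar_locally p_infty) - RInt_gen p (at_point y) (Rbar_locally p_infty)
  = W p y - W p x.
Proof.
  intros Hc Hy.
  assert (H1 : is_RInt_gen p (at_point x) (at_point y) (RInt p x y)).
  { apply is_RInt_gen_at_point. apply (RInt_correct (V := R_CompleteNormedModule)). apply exRInt_all; auto. }
  assert (H2 := RInt_gen_correct (V := R_CompleteNormedModule) (Fa := at_point y) (Fb := Rbar_locally p_infty) p Hy).
  assert (H3 := is_RInt_gen_Chasles p y _ _ H1 H2).
  rewrite (is_RInt_gen_unique (V := R_CompleteNormedModule) p _ H3).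
  rewrite Rplus_plus. rewrite <- RInt_W; auto. simpl. lra.
Qed.

Lemma tailQ (q : R -> R) (x y : R) : (forall z, continuous q z) ->
  ex_RInt_gen q (Rbar_locally m_infty) (at_point x) ->
  RInt_gen q (Rbar_locally m_infty) (at_point y) - RInt_gen q (Rbar_locally m_infty) (at_point x)
  = W q y - W q x.
Proof.
  intros Hc Hx.
  assert (H1 : is_RInt_gen q (at_point x) (at_point y) (RInt q x y)).
  { apply is_RInt_gen_at_point. apply (RInt_correct (V := R_CompleteNormedModule)). apply exRInt_all; auto. }
  assert (H2 := RInt_gen_correct (V := R_CompleteNormedModule) (Fa := Rbar_locally m_infty) (Fb := at_point x) q Hx).
  assert (H3 := is_RInt_gen_Chasles q x _ _ H2 H1).
  rewrite (is_RInt_gen_unique (V := R_CompleteNormedModule) q _ H3).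
  rewrite Rplus_plus. rewrite <- RInt_W; auto. simpl. lra.
Qed.

Lemma lin_one (p q : R -> R) (c x y : R) :
  (forall z, continuous p z) -> (forall z, continuous q z) ->
  RInt (fun z => (z - c) * p z) x y =
  1 * (1 * (W (fun z => z * p z) y - W (fun z => z * p z) x) + (- c) * (W p y - W p x)) +
  0 * (1 * (W (fun z => z * q z) y - W (fun z => z * q z) x) + (- c) * (W q y - W q x)).
Proof.
  intros Hp Hq. rewrite <- RInt_comb; auto. apply RInt_extR. intros; ring.
Qed.

Lemma wc_sign (p q : R -> R) (m0 z : R) :
  (forall z w, z < w -> p w * q z < p z * q w) ->
  (z < m0 -> 0 < q m0 * p z + - p m0 * q z) /\ (m0 < z -> q m0 * p z + - p m0 * q z < 0).
Proof.
  intros Hr. split; intro H.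
  - specialize (Hr z m0 H). lra.
  - specialize (Hr m0 z H). lra.
Qed.

Lemma core (p q : R -> R) (K al1 al2 a1 b1 a2 b2 : R) :
  (forall z, continuous p z) -> (forall z, continuous q z) ->
  (forall z, 0 < p z) -> (forall z, 0 < q z) ->
  (forall z w, z < w -> p w * q z < p z * q w) ->
  (forall b, ex_RInt_gen p (at_point b) (Rbar_locally p_infty)) ->
  (forall a, ex_RInt_gen q (Rbar_locally m_infty) (at_point a)) ->
  0 < K -> al1 < al2 ->
  a1 < b1 -> a1 < al1 -> al1 + K < b1 ->
  a2 < b2 -> a2 < al2 -> al2 + K < b2 ->
  RInt (fun z => (z - al1) * p z) a1 b1 = - K * RInt_gen p (at_point b1) (Rbar_locally p_infty) ->
  RInt (fun z => (z - (al1 + K)) * q z) a1 b1 = K * RInt_gen q (Rbar_locally m_infty) (at_point a1) ->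
  RInt (fun z => (z - al2) * p z) a2 b2 = - K * RInt_gen p (at_point b2) (Rbar_locally p_infty) ->
  RInt (fun z => (z - (al2 + K)) * q z) a2 b2 = K * RInt_gen q (Rbar_locally m_infty) (at_point a2) ->
  a1 < a2 /\ b1 < b2.
Proof.
  intros Hp Hq Hpp Hqp Hr HtP HtQ HK Hal Hab1 Ha1 Hb1 Hab2 Ha2 Hb2 E11 E21 E12 E22.
  rewrite (lin_one p q) in E11, E12; auto.
  rewrite (lin_one q p) in E21, E22; auto.
  assert (TP := tailP p b2 b1 Hp (HtP b1)).
  assert (TQ := tailQ q a1 a2 Hq (HtQ a1)).
  set (Pp1 := RInt_gen p (at_point b1) (Rbar_locally p_infty)) in *.
  set (Pp2 := RInt_gen p (at_point b2) (Rbar_locally p_infty)) in *.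
  set (Qq1 := RInt_gen q (Rbar_locally m_infty) (at_point a1)) in *.
  set (Qq2 := RInt_gen q (Rbar_locally m_infty) (at_point a2)) in *.
  set (P1 := W (fun z => z * p z)) in *. set (P0 := W p) in *.
  set (Q1 := W (fun z => z * q z)) in *. set (Q0 := W q) in *.
  assert (Hpp2 : Pp2 = Pp1 + (P0 b1 - P0 b2)) by lra.
  assert (Hqq2 : Qq2 = Qq1 + (Q0 a2 - Q0 a1)) by lra.
  rewrite Hpp2 in E12. rewrite Hqq2 in E22.
  assert (Sp : al1 * (P0 a2 - P0 a1) - (P1 a2 - P1 a1) - ((P1 b1 - P1 b2) - (al1 + K) * (P0 b1 - P0 b2))
               = (al2 - al1) * (P0 b2 - P0 a2)) by lra.
  assert (Sq : al1 * (Q0 a2 - Q0 a1) - (Q1 a2 - Q1 a1) - ((Q1 b1 - Q1 b2) - (al1 + K) * (Q0 b1 - Q0 b2))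
               = (al2 - al1) * (Q0 b2 - Q0 a2)) by lra.
  assert (Tp : al2 * (P0 a2 - P0 a1) - (P1 a2 - P1 a1) - ((P1 b1 - P1 b2) - (al2 + K) * (P0 b1 - P0 b2))
               = (al2 - al1) * (P0 b1 - P0 a1)) by lra.
  assert (Tq : al2 * (Q0 a2 - Q0 a1) - (Q1 a2 - Q1 a1) - ((Q1 b1 - Q1 b2) - (al2 + K) * (Q0 b1 - Q0 b2))
               = (al2 - al1) * (Q0 b1 - Q0 a1)) by lra.
  assert (CaseA : a2 <= a1 -> b2 <= b1 -> False).
  { intros h1 h2.
    assert (S1 := sgn_le p q 1 0 (-1) al1 a2 a1 Hp Hq h1).
    assert (S2 := sgn_le p q 1 0 1 (-(al1 + K)) b2 b1 Hp Hq h2).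
    assert (S3 := sgn_lt p q 1 0 0 1 a2 b2 Hp Hq Hab2).
    fold P1 P0 Q1 Q0 in S1, S2, S3.
    assert (H1 : 0 <= 1 * (-1 * (P1 a1 - P1 a2) + al1 * (P0 a1 - P0 a2)) +
                      0 * (-1 * (Q1 a1 - Q1 a2) + al1 * (Q0 a1 - Q0 a2))).
    { apply S1. intros z Hz. specialize (Hpp z). nra. }
    assert (H2 : 0 <= 1 * (1 * (P1 b1 - P1 b2) + - (al1 + K) * (P0 b1 - P0 b2)) +
                      0 * (1 * (Q1 b1 - Q1 b2) + - (al1 + K) * (Q0 b1 - Q0 b2))).
    { apply S2. intros z Hz. specialize (Hpp z). nra. }
    assert (H3 : 0 < 1 * (0 * (P1 b2 - P1 a2) + 1 * (P0 b2 - P0 a2)) +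
                      0 * (0 * (Q1 b2 - Q1 a2) + 1 * (Q0 b2 - Q0 a2))).
    { apply S3. intros z Hz. specialize (Hpp z). nra. }
    assert (H4 : 0 < (al2 - al1) * (P0 b2 - P0 a2)) by (apply Rmult_lt_0_compat; lra).
    lra. }
  assert (CaseB : a2 <= a1 -> b1 < b2 -> False).
  { intros h1 h2.
    set (M := Rmax b1 (al2 + K)).
    assert (HM1 : b1 <= M) by apply Rmax_l.
    assert (HM2 : al2 + K <= M) by apply Rmax_r.
    assert (HM3 : M = b1 \/ M = al2 + K).
    { unfold M. apply Rmax_case_strong; auto. }
    set (A := q M). set (B := - p M).
    assert (S1 := sgn_le p q A B (-1) al2 a2 a1 Hp Hq h1).
    assert (S2 := sgn_le p q A B (-1) (al2 + K) b1 b2 Hp Hq (Rlt_le _ _ h2)).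
    assert (S3 := sgn_lt p q A B 0 1 a1 b1 Hp Hq Hab1).
    fold P1 P0 Q1 Q0 in S1, S2, S3.
    assert (H1 : 0 <= A * (-1 * (P1 a1 - P1 a2) + al2 * (P0 a1 - P0 a2)) +
                      B * (-1 * (Q1 a1 - Q1 a2) + al2 * (Q0 a1 - Q0 a2))).
    { apply S1. intros z Hz. destruct (wc_sign p q M z Hr) as [w1 w2].
      unfold A, B. assert (z < M) by lra. specialize (w1 H). nra. }
    assert (H2 : 0 <= A * (-1 * (P1 b2 - P1 b1) + (al2 + K) * (P0 b2 - P0 b1)) +
                      B * (-1 * (Q1 b2 - Q1 b1) + (al2 + K) * (Q0 b2 - Q0 b1))).
    { apply S2. intros z Hz. destruct (wc_sign p q M z Hr) as [w1 w2].
      unfold A, B. destruct (Rtotal_order z M) as [h|[h|h]].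
      - specialize (w1 h). assert (z < al2 + K) by (destruct HM3; lra). nra.
      - subst z. replace (q M * p M + - p M * q M) with 0 by ring. lra.
      - specialize (w2 h). nra. }
    assert (H3 : 0 < A * (0 * (P1 b1 - P1 a1) + 1 * (P0 b1 - P0 a1)) +
                      B * (0 * (Q1 b1 - Q1 a1) + 1 * (Q0 b1 - Q0 a1))).
    { apply S3. intros z Hz. destruct (wc_sign p q M z Hr) as [w1 w2].
      unfold A, B. assert (z < M) by lra. specialize (w1 H). nra. }
    assert (H4 : 0 < (al2 - al1) * (A * (0 * (P1 b1 - P1 a1) + 1 * (P0 b1 - P0 a1)) +
                      B * (0 * (Q1 b1 - Q1 a1) + 1 * (Q0 b1 - Q0 a1)))) by (apply Rmult_lt_0_compat; lra).
    pose proof (f_equal2 (fun s t => A * s + B * t) Tp Tq) as HC. cbv beta in HC.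
    lra. }
  assert (CaseC : a1 < a2 -> b2 <= b1 -> False).
  { intros h1 h2.
    set (m0 := Rmin a2 al1).
    assert (HM1 : m0 <= a2) by apply Rmin_l.
    assert (HM2 : m0 <= al1) by apply Rmin_r.
    assert (HM3 : m0 = a2 \/ m0 = al1).
    { unfold m0. apply Rmin_case_strong; auto. }
    set (A := q m0). set (B := - p m0).
    assert (S1 := sgn_le p q A B (-1) al1 a1 a2 Hp Hq (Rlt_le _ _ h1)).
    assert (S2 := sgn_le p q A B (-1) (al1 + K) b2 b1 Hp Hq h2).
    assert (S3 := sgn_lt p q A B 0 (-1) a2 b2 Hp Hq Hab2).
    fold P1 P0 Q1 Q0 in S1, S2, S3.
    assert (H1 : 0 <= A * (-1 * (P1 a2 - P1 a1) + al1 * (P0 a2 - P0 a1)) +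
                      B * (-1 * (Q1 a2 - Q1 a1) + al1 * (Q0 a2 - Q0 a1))).
    { apply S1. intros z Hz. destruct (wc_sign p q m0 z Hr) as [w1 w2].
      unfold A, B. destruct (Rtotal_order z m0) as [h|[h|h]].
      - specialize (w1 h). nra.
      - subst z. replace (q m0 * p m0 + - p m0 * q m0) with 0 by ring. lra.
      - specialize (w2 h). assert (al1 < z) by (destruct HM3; lra). nra. }
    assert (H2 : 0 <= A * (-1 * (P1 b1 - P1 b2) + (al1 + K) * (P0 b1 - P0 b2)) +
                      B * (-1 * (Q1 b1 - Q1 b2) + (al1 + K) * (Q0 b1 - Q0 b2))).
    { apply S2. intros z Hz. destruct (wc_sign p q m0 z Hr) as [w1 w2].
      unfold A, B. assert (m0 < z) by lra. specialize (w2 H). nra. }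
    assert (H3 : 0 < A * (0 * (P1 b2 - P1 a2) + -1 * (P0 b2 - P0 a2)) +
                      B * (0 * (Q1 b2 - Q1 a2) + -1 * (Q0 b2 - Q0 a2))).
    { apply S3. intros z Hz. destruct (wc_sign p q m0 z Hr) as [w1 w2].
      unfold A, B. assert (m0 < z) by lra. specialize (w2 H). nra. }
    assert (H4 : 0 < (al2 - al1) * (A * (0 * (P1 b2 - P1 a2) + -1 * (P0 b2 - P0 a2)) +
                      B * (0 * (Q1 b2 - Q1 a2) + -1 * (Q0 b2 - Q0 a2)))) by (apply Rmult_lt_0_compat; lra).
    pose proof (f_equal2 (fun s t => A * s + B * t) Sp Sq) as HC. cbv beta in HC.
    lra. }
  split.
  - destruct (Rlt_le_dec a1 a2) as [h|h]; auto.
    destruct (Rle_lt_dec b2 b1) as [h'|h']; exfalso; [apply CaseA|apply CaseB]; auto.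
  - destruct (Rlt_le_dec b1 b2) as [h|h]; auto.
    destruct (Rle_lt_dec a2 a1) as [h'|h']; exfalso; [apply CaseA|apply CaseC]; auto.
Qed.

Definition gk (k y : R) := fun t => Rpower t k * exp (- t ^ 2 / 2 - y * t).
Definition Jk (k y : R) := RInt_gen (gk k y) (at_right 0) (Rbar_locally p_infty).
Definition gam (k : R) := fun t => Rpower t k * exp (- t).
Definition Gk (k : R) := RInt_gen (gam k) (at_right 0) (Rbar_locally p_infty).

Lemma Rpower_le_exp (t k : R) : 0 < t -> 0 <= k -> Rpower t k <= exp (k * t).
Proof.
  intros Ht Hk. unfold Rpower. apply exp_le.
  assert (H := exp_ineq1_le (ln t)). rewrite exp_ln in H; auto.
  apply Rmult_le_compat_l; lra.
Qed.

Lemma Rpower_pos (t k : R) : 0 < Rpower t k.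
Proof. unfold Rpower. apply exp_pos. Qed.

Lemma gk_cont (k y t : R) : 0 < t -> continuous (gk k y) t.
Proof. intro Ht. apply exd_cont. unfold gk, Rpower. auto_derive. auto. Qed.

Lemma gam_cont (k t : R) : 0 < t -> continuous (gam k) t.
Proof. intro Ht. apply exd_cont. unfold gam, Rpower. auto_derive. auto. Qed.

Lemma gk_bound (k y t : R) : 0 <= k -> 0 < t ->
  0 <= gk k y t <= exp ((k - y + 1) ^ 2 / 2) * exp (- 1 * t).
Proof.
  intros Hk Ht. unfold gk. split.
  - left. apply Rmult_lt_0_compat. apply Rpower_pos. apply exp_pos.
  - apply Rle_trans with (exp (k * t) * exp (- t ^ 2 / 2 - y * t)).
    + apply Rmult_le_compat_r. left; apply exp_pos. apply Rpower_le_exp; auto.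
    + rewrite <- !exp_plus. apply exp_le.
      assert (0 <= (k - y + 1 - t) ^ 2) by apply pow2_ge_0. nra.
Qed.

Lemma gam_bound (k t : R) : 0 < k -> 0 < t ->
  0 <= gam k t <= exp (k * ln (2 * k) - k) * exp (- (1/2) * t).
Proof.
  intros Hk Ht. unfold gam. split.
  - left. apply Rmult_lt_0_compat. apply Rpower_pos. apply exp_pos.
  - unfold Rpower. rewrite <- !exp_plus. apply exp_le.
    assert (Hl : ln t = ln (t / (2 * k)) + ln (2 * k)).
    { rewrite <- ln_mult. f_equal. field. lra. apply Rdiv_lt_0_compat; lra. lra. }
    assert (H := exp_ineq1_le (ln (t / (2 * k)))).
    rewrite exp_ln in H. 2: apply Rdiv_lt_0_compat; lra.
    assert (H2 : k * (1 + ln (t / (2 * k))) <= k * (t / (2 * k))) by (apply Rmult_le_compat_l; lra).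
    replace (k * (t / (2 * k))) with (t / 2) in H2 by (field; lra).
    rewrite Hl. nra.
Qed.

Lemma RIntgen_lb (f : R -> R) (l : R) :
  (forall t, 0 < t -> continuous f t) -> (forall t, 0 < t -> 0 <= f t) ->
  is_RInt_gen f (at_right 0) (Rbar_locally p_infty) l -> RInt f 1 2 <= l.
Proof.
  intros Hc Hn H.
  assert (Hex : forall x y, 0 < x -> 0 < y -> ex_RInt f x y).
  { intros x y Hx Hy. apply (exRInt_on f (fun z => 0 < z)); auto.
    intros z [Hz _]. revert Hz. apply Rmin_case_strong; intros; lra. }
  apply (RIntgen_ge (HFa := at_right_proper_filter 0) (HFb := Rbar_locally_filter p_infty) f l); auto.
  apply (Filter_prod _ _ _ (fun a => 0 < a < 1) (fun b => 2 < b)).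
  - exists (mkposreal 1 Rlt_0_1). intros a Ha Ha0. split; auto.
    unfold ball in Ha; simpl in Ha; unfold AbsRing_ball, abs, minus, plus, opp in Ha; simpl in Ha.
    apply Rabs_def2 in Ha. lra.
  - simpl. exists 2. auto.
  - intros a b Ha Hb y Hy. simpl in Hy.
    apply (is_RInt_unique (V := R_CompleteNormedModule)) in Hy. rewrite <- Hy.
    rewrite <- (RInt_Chasles (V := R_CompleteNormedModule) f a 1 b); try (apply Hex; lra).
    rewrite <- (RInt_Chasles (V := R_CompleteNormedModule) f 1 2 b); try (apply Hex; lra).
    rewrite !Rplus_plus.
    assert (0 <= RInt f a 1) by (apply RInt_ge_0; [lra| apply Hex; lra| intros; apply Hn; lra]).
    assert (0 <= RInt f 2 b) by (apply RInt_ge_0; [lra| apply Hex; lra| intros; apply Hn; lra]).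
    unfold plus in *; simpl in *. lra.
Qed.

Lemma RIntgen_nonneg (f : R -> R) (l : R) :
  (forall t, 0 < t -> continuous f t) -> (forall t, 0 < t -> 0 <= f t) ->
  is_RInt_gen f (at_right 0) (Rbar_locally p_infty) l -> 0 <= l.
Proof.
  intros Hc Hn H. apply Rle_trans with (RInt f 1 2). 2: apply (RIntgen_lb f); auto.
  apply RInt_ge_0. lra. apply (exRInt_on f (fun z => 0 < z)); auto.
  intros z [Hz _]. revert Hz. apply Rmin_case_strong; intros; lra.
  intros; apply Hn; lra.
Qed.

Lemma RIntgen_pos (f : R -> R) (l : R) :
  (forall t, 0 < t -> continuous f t) -> (forall t, 0 < t -> 0 < f t) ->
  is_RInt_gen f (at_right 0) (Rbar_locally p_infty) l -> 0 < l.
Proof.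
  intros Hc Hn H. apply Rlt_le_trans with (RInt f 1 2).
  2: apply (RIntgen_lb f); auto; intros; left; auto.
  apply RInt_gt_0. lra. intros; apply Hn; lra. intros; apply Hc; lra.
Qed.

Lemma J_is (k y : R) : 0 <= k -> is_RInt_gen (gk k y) (at_right 0) (Rbar_locally p_infty) (Jk k y).
Proof.
  intro Hk. destruct (IG (gk k y) (exp ((k - y + 1) ^ 2 / 2)) 1) as [l Hl]; [lra| | |].
  - intros; apply gk_cont; auto.
  - intros; apply gk_bound; auto.
  - unfold Jk. apply (RInt_gen_correct (V := R_CompleteNormedModule)). exists l; auto.
Qed.

Lemma G_is (k : R) : 0 < k -> is_RInt_gen (gam k) (at_right 0) (Rbar_locally p_infty) (Gk k).
Proof.
  intro Hk. destruct (IG (gam k) (exp (k * ln (2 * k) - k)) (1/2)) as [l Hl]; [lra| | |].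
  - intros; apply gam_cont; auto.
  - intros; apply gam_bound; auto.
  - unfold Gk. apply (RInt_gen_correct (V := R_CompleteNormedModule)). exists l; auto.
Qed.

Lemma J_pos (k y : R) : 0 <= k -> 0 < Jk k y.
Proof.
  intro Hk. apply (RIntgen_pos (gk k y)). intros; apply gk_cont; auto.
  intros t Ht. unfold gk. apply Rmult_lt_0_compat. apply Rpower_pos. apply exp_pos.
  apply J_is; auto.
Qed.

Lemma G_pos (k : R) : 0 < k -> 0 < Gk k.
Proof.
  intro Hk. apply (RIntgen_pos (gam k)). intros; apply gam_cont; auto.
  intros t Ht. unfold gam. apply Rmult_lt_0_compat. apply Rpower_pos. apply exp_pos.
  apply G_is; auto.
Qed.

Lemma J_decr (k y1 y2 : R) : 0 <= k -> y1 < y2 -> Jk k y2 < Jk k y1.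
Proof.
  intros Hk Hy.
  assert (H := is_RInt_gen_minus (Fa := at_right 0) (Fb := Rbar_locally p_infty) _ _ _ _ (J_is k y1 Hk) (J_is k y2 Hk)).
  cut (0 < minus (Jk k y1) (Jk k y2)).
  { unfold minus, plus, opp; simpl. lra. }
  eapply RIntgen_pos; [ | | exact H].
  - intros t Ht. apply (cont_extR (fun t => gk k y1 t + -1 * gk k y2 t)).
    + intros; unfold minus, plus, opp; simpl. ring.
    + apply cont_plusR. apply gk_cont; auto. apply cont_multR. apply cont_constR. apply gk_cont; auto.
  - intros t Ht. unfold minus, plus, opp; simpl. unfold gk.
    assert (exp (- t ^ 2 / 2 - y2 * t) < exp (- t ^ 2 / 2 - y1 * t)) by (apply exp_increasing; nra).
    assert (0 < Rpower t k) by apply Rpower_pos. nra.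
Qed.

Lemma exp_convex (u v l : R) : 0 <= l <= 1 ->
  exp (l * u + (1 - l) * v) <= l * exp u + (1 - l) * exp v.
Proof.
  intros Hl. set (w := l * u + (1 - l) * v).
  assert (H1 : exp w * (1 + (u - w)) <= exp u).
  { replace (exp u) with (exp w * exp (u - w)). 2:{ rewrite <- exp_plus. f_equal. ring. }
    apply Rmult_le_compat_l. left; apply exp_pos. apply exp_ineq1_le. }
  assert (H2 : exp w * (1 + (v - w)) <= exp v).
  { replace (exp v) with (exp w * exp (v - w)). 2:{ rewrite <- exp_plus. f_equal. ring. }
    apply Rmult_le_compat_l. left; apply exp_pos. apply exp_ineq1_le. }
  assert (H3 : l * (exp w * (1 + (u - w))) + (1 - l) * (exp w * (1 + (v - w))) = exp w).
  { unfold w. ring. }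
  assert (l * (exp w * (1 + (u - w))) <= l * exp u) by (apply Rmult_le_compat_l; lra).
  assert ((1 - l) * (exp w * (1 + (v - w))) <= (1 - l) * exp v) by (apply Rmult_le_compat_l; lra).
  lra.
Qed.

Lemma J_convex (k u v l : R) : 0 <= k -> 0 <= l <= 1 ->
  Jk k (l * u + (1 - l) * v) <= l * Jk k u + (1 - l) * Jk k v.
Proof.
  intros Hk Hl.
  set (w := l * u + (1 - l) * v).
  assert (H1 := is_RInt_gen_scal (Fa := at_right 0) (Fb := Rbar_locally p_infty) _ l _ (J_is k u Hk)).
  assert (H2 := is_RInt_gen_scal (Fa := at_right 0) (Fb := Rbar_locally p_infty) _ (1 - l) _ (J_is k v Hk)).
  assert (H3 := is_RInt_gen_plus (Fa := at_right 0) (Fb := Rbar_locally p_infty) _ _ _ _ H1 H2).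
  assert (H4 := is_RInt_gen_minus (Fa := at_right 0) (Fb := Rbar_locally p_infty) _ _ _ _ H3 (J_is k w Hk)).
  cut (0 <= minus (plus (scal l (Jk k u)) (scal (1 - l) (Jk k v))) (Jk k w)).
  { unfold minus, plus, opp, scal; simpl; unfold mult; simpl. lra. }
  eapply RIntgen_nonneg; [ | | exact H4].
  - intros t Ht. apply (cont_extR (fun t => l * gk k u t + (1 - l) * gk k v t + -1 * gk k w t)).
    + intros; unfold minus, plus, opp, scal; simpl; unfold mult; simpl. ring.
    + apply cont_plusR. apply cont_plusR; apply cont_multR; try apply cont_constR; apply gk_cont; auto.
      apply cont_multR. apply cont_constR. apply gk_cont; auto.
  - intros t Ht. unfold minus, plus, opp, scal; simpl; unfold mult; simpl. unfold gk.
    assert (Hc := exp_convex (- t ^ 2 / 2 - u * t) (- t ^ 2 / 2 - v * t) l Hl).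
    replace (l * (- t ^ 2 / 2 - u * t) + (1 - l) * (- t ^ 2 / 2 - v * t)) with (- t ^ 2 / 2 - w * t) in Hc
      by (unfold w; ring).
    assert (0 < Rpower t k) by apply Rpower_pos. nra.
Qed.

Lemma lip_cont (F : R -> R) (y0 D : R) : 0 <= D ->
  (forall y, Rabs (y - y0) <= 1 -> Rabs (F y - F y0) <= D * Rabs (y - y0)) -> continuous F y0.
Proof.
  intros HD H. apply <- (filterlim_locally_ball_norm (K := R_AbsRing) (U := R_NormedModule) (F := locally y0)).
  intros eps.
  assert (Hd : 0 < Rmin 1 (eps / (D + 1))).
  { apply Rmin_case. lra. apply Rdiv_lt_0_compat. apply cond_pos. lra. }
  exists (mkposreal _ Hd). intros y Hy.
  unfold ball in Hy; simpl in Hy; unfold AbsRing_ball, abs, minus, plus, opp in Hy; simpl in Hy.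
  apply ball_norm_R.
  assert (h1 : Rabs (y - y0) <= 1) by (apply Rlt_le, Rlt_le_trans with (1 := Hy); apply Rmin_l).
  assert (h2 : Rabs (y - y0) < eps / (D + 1)) by (apply Rlt_le_trans with (1 := Hy); apply Rmin_r).
  apply Rle_lt_trans with (1 := H y h1).
  assert (h3 : (D + 1) * Rabs (y - y0) < eps).
  { apply Rmult_lt_compat_l with (r := D + 1) in h2. 2: lra.
    replace ((D + 1) * (eps / (D + 1))) with (pos eps) in h2 by (field; lra). exact h2. }
  assert (0 <= Rabs (y - y0)) by apply Rabs_pos. nra.
Qed.

Lemma J_cont (k y0 : R) : 0 <= k -> continuous (Jk k) y0.
Proof.
  intro Hk. apply (lip_cont _ y0 (Jk k (y0 - 1) - Jk k y0)).
  - left. assert (H := J_decr k (y0 - 1) y0 Hk). lra.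
  - intros y Hy.
    destruct (Rtotal_order y y0) as [h|[h|h]].
    +
      set (h' := y0 - y).
      assert (Hc := J_convex k y0 (y0 - 1) (1 - h') Hk).
      replace ((1 - h') * y0 + (1 - (1 - h')) * (y0 - 1)) with y in Hc by (unfold h'; ring).
      assert (Hd := J_decr k y y0 Hk h).
      rewrite Rabs_right by lra. rewrite Rabs_left in Hy |- * by lra.
      assert (0 <= 1 - h' <= 1) by (unfold h'; lra).
      specialize (Hc H). unfold h' in Hc. nra.
    + subst. unfold Rminus. rewrite !Rplus_opp_r, !Rabs_R0. lra.
    + assert (Hd := J_decr k y0 y Hk h).
      rewrite Rabs_left by lra. rewrite Rabs_right in Hy |- * by lra.
      set (h' := y - y0).
      assert (Hh : 0 < h') by (unfold h'; lra).
      assert (Hc := J_convex k y (y0 - 1) (1 / (1 + h')) Hk).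
      replace (1 / (1 + h') * y + (1 - 1 / (1 + h')) * (y0 - 1)) with y0 in Hc by (unfold h'; field; lra).
      assert (Hl : 0 <= 1 / (1 + h') <= 1).
      { split. apply Rlt_le, Rdiv_lt_0_compat; lra.
        apply Rmult_le_reg_l with (1 + h'). lra. field_simplify; lra. }
      specialize (Hc Hl).
      assert (Hc' : (1 + h') * Jk k y0 <= Jk k y + h' * Jk k (y0 - 1)).
      { apply Rmult_le_compat_l with (r := 1 + h') in Hc. 2: lra.
        replace ((1 + h') * (1 / (1 + h') * Jk k y + (1 - 1 / (1 + h')) * Jk k (y0 - 1)))
          with (Jk k y + h' * Jk k (y0 - 1)) in Hc by (field; lra). exact Hc. }
      nra.
Qed.

Definition kk (r rho : R) := - (- (r + rho) / rho) - 1.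
Definition Yf (rho m sigma x : R) := (x - m) * sqrt (2 * rho) / sigma.

Lemma kk_pos r rho : 0 < r -> 0 < rho -> 0 < kk r rho.
Proof.
  intros Hr Hrho. unfold kk.
  replace (- (- (r + rho) / rho) - 1) with (r / rho) by (field; lra).
  apply Rdiv_lt_0_compat; auto.
Qed.

Lemma parabD_eq r rho yv :
  parabD (- (r + rho) / rho) yv = exp (- yv ^ 2 / 4) / Gk (kk r rho) * Jk (kk r rho) yv.
Proof. reflexivity. Qed.

Lemma expA rho m sigma x yv : 0 < rho -> 0 < sigma -> yv ^ 2 = (Yf rho m sigma x) ^ 2 ->
  exp (rho * (x - m) ^ 2 / (2 * sigma ^ 2)) * exp (- yv ^ 2 / 4) = 1.
Proof.
  intros Hrho Hs Hy. rewrite <- exp_plus. rewrite <- exp_0. f_equal.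
  rewrite Hy. unfold Yf.
  assert (Hsq : sqrt (2 * rho) * sqrt (2 * rho) = 2 * rho) by (apply sqrt_sqrt; lra).
  replace (((x - m) * sqrt (2 * rho) / sigma) ^ 2) with ((x - m) ^ 2 * (sqrt (2 * rho) * sqrt (2 * rho)) / sigma ^ 2)
    by (field; lra).
  rewrite Hsq. field. lra.
Qed.

Lemma phi_eq r rho m sigma x : 0 < rho -> 0 < sigma -> 0 < r ->
  phi_hat r rho m sigma x = Jk (kk r rho) (Yf rho m sigma x) / Gk (kk r rho).
Proof.
  intros Hrho Hs Hr. unfold phi_hat. fold (Yf rho m sigma x). rewrite parabD_eq.
  assert (HG := G_pos _ (kk_pos r rho Hr Hrho)).
  assert (HE := expA rho m sigma x (Yf rho m sigma x) Hrho Hs eq_refl).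
  set (E1 := exp (rho * (x - m) ^ 2 / (2 * sigma ^ 2))) in *.
  set (E2 := exp (- Yf rho m sigma x ^ 2 / 4)) in *.
  set (J := Jk (kk r rho) _). set (G := Gk (kk r rho)) in *.
  transitivity ((E1 * E2) * J / G). field; lra. rewrite HE. field; lra.
Qed.

Lemma psi_eq r rho m sigma x : 0 < rho -> 0 < sigma -> 0 < r ->
  psi_hat r rho m sigma x = Jk (kk r rho) (- Yf rho m sigma x) / Gk (kk r rho).
Proof.
  intros Hrho Hs Hr. unfold psi_hat. fold (Yf rho m sigma x). rewrite parabD_eq.
  assert (HG := G_pos _ (kk_pos r rho Hr Hrho)).
  assert (HE := expA rho m sigma x (- Yf rho m sigma x) Hrho Hs ltac:(ring)).
  set (E1 := exp (rho * (x - m) ^ 2 / (2 * sigma ^ 2))) in *.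
  set (E2 := exp (- (- Yf rho m sigma x) ^ 2 / 4)) in *.
  set (J := Jk (kk r rho) _). set (G := Gk (kk r rho)) in *.
  transitivity ((E1 * E2) * J / G). field; lra. rewrite HE. field; lra.
Qed.

Lemma Yf_lt rho m sigma z w : 0 < rho -> 0 < sigma -> z < w -> Yf rho m sigma z < Yf rho m sigma w.
Proof.
  intros Hrho Hs H. unfold Yf. unfold Rdiv. apply Rmult_lt_compat_r.
  apply Rinv_0_lt_compat; auto. apply Rmult_lt_compat_r. apply sqrt_lt_R0; lra. lra.
Qed.

Lemma Yf_cont rho m sigma z : 0 < sigma -> continuous (Yf rho m sigma) z.
Proof. intro Hs. apply exd_cont. unfold Yf. auto_derive. lra. Qed.

Lemma m_cont rho m sigma z : 0 < sigma -> continuous (m_hat' rho m sigma) z.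
Proof. intro Hs. apply exd_cont. unfold m_hat'. auto_derive. lra. Qed.

Lemma m_pos rho m sigma z : 0 < sigma -> 0 < m_hat' rho m sigma z.
Proof.
  intro Hs. unfold m_hat'. apply Rmult_lt_0_compat. apply Rdiv_lt_0_compat. lra. apply pow_lt; lra.
  apply exp_pos.
Qed.

Lemma J_le k y1 y2 : 0 <= k -> y1 <= y2 -> Jk k y2 <= Jk k y1.
Proof. intros Hk [h|h]. left; apply J_decr; auto. subst; lra. Qed.

Lemma phi_cont r rho m sigma z : 0 < r -> 0 < rho -> 0 < sigma -> continuous (phi_hat r rho m sigma) z.
Proof.
  intros Hr Hrho Hs.
  apply (cont_extR (fun x => Jk (kk r rho) (Yf rho m sigma x) * / Gk (kk r rho))).
  - intros; rewrite phi_eq; auto.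
  - apply cont_multR. apply (cont_compR (Yf rho m sigma) (Jk (kk r rho))). apply Yf_cont; auto.
    apply J_cont. left; apply kk_pos; auto. apply cont_constR.
Qed.

Lemma psi_cont r rho m sigma z : 0 < r -> 0 < rho -> 0 < sigma -> continuous (psi_hat r rho m sigma) z.
Proof.
  intros Hr Hrho Hs.
  apply (cont_extR (fun x => Jk (kk r rho) (- Yf rho m sigma x) * / Gk (kk r rho))).
  - intros; rewrite psi_eq; auto.
  - apply cont_multR. apply (cont_compR (fun x => - Yf rho m sigma x) (Jk (kk r rho))).
    apply (cont_extR (fun x => -1 * Yf rho m sigma x)). intros; ring.
    apply cont_multR. apply cont_constR. apply Yf_cont; auto.
    apply J_cont. left; apply kk_pos; auto. apply cont_constR.
Qed.

Lemma div_nonneg_sq (a s : R) : 0 <= a -> 0 < s -> 0 <= a / s ^ 2.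
Proof. intros Ha Hs. unfold Rdiv. apply Rmult_le_pos; auto. left; apply Rinv_0_lt_compat, pow_lt; auto. Qed.

Lemma m_bound_r rho m sigma z : 0 < rho -> 0 < sigma ->
  m_hat' rho m sigma z <= 2 / sigma ^ 2 * exp (rho / sigma ^ 2 + 2 * rho * m / sigma ^ 2) * exp (- (2 * rho / sigma ^ 2) * z).
Proof.
  intros Hr Hs. unfold m_hat'. rewrite Rmult_assoc, <- exp_plus.
  apply Rmult_le_compat_l. apply div_nonneg_sq; lra. apply exp_le.
  assert (H : rho / sigma ^ 2 + 2 * rho * m / sigma ^ 2 + - (2 * rho / sigma ^ 2) * z - (- rho * (z - m) ^ 2 / sigma ^ 2)
              = rho * (z - m - 1) ^ 2 / sigma ^ 2) by (field; lra).
  assert (0 <= rho * (z - m - 1) ^ 2 / sigma ^ 2).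
  { apply div_nonneg_sq; auto. apply Rmult_le_pos; [lra| apply pow2_ge_0]. }
  lra.
Qed.

Lemma m_bound_l rho m sigma z : 0 < rho -> 0 < sigma ->
  m_hat' rho m sigma z <= 2 / sigma ^ 2 * exp (rho / sigma ^ 2 - 2 * rho * m / sigma ^ 2) * exp (- - (2 * rho / sigma ^ 2) * z).
Proof.
  intros Hr Hs. unfold m_hat'. rewrite Rmult_assoc, <- exp_plus.
  apply Rmult_le_compat_l. apply div_nonneg_sq; lra. apply exp_le.
  assert (H : rho / sigma ^ 2 - 2 * rho * m / sigma ^ 2 + - - (2 * rho / sigma ^ 2) * z - (- rho * (z - m) ^ 2 / sigma ^ 2)
              = rho * (z - m + 1) ^ 2 / sigma ^ 2) by (field; lra).
  assert (0 <= rho * (z - m + 1) ^ 2 / sigma ^ 2).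
  { apply div_nonneg_sq; auto. apply Rmult_le_pos; [lra| apply pow2_ge_0]. }
  lra.
Qed.


Lemma phi_pos (r rho m sigma : R) (Hr : 0 < r) (Hrho : 0 < rho) (Hs : 0 < sigma) z : 0 < phi_hat r rho m sigma z.
Proof.
  pose (k := kk r rho). assert (Hk : 0 <= k) by exact (Rlt_le _ _ (kk_pos r rho Hr Hrho)).
  assert (HG : 0 < Gk k) by exact (G_pos _ (kk_pos r rho Hr Hrho)). rewrite phi_eq; auto. apply Rdiv_lt_0_compat; auto. apply J_pos; auto. Qed.
Lemma psi_pos (r rho m sigma : R) (Hr : 0 < r) (Hrho : 0 < rho) (Hs : 0 < sigma) z : 0 < psi_hat r rho m sigma z.
Proof.
  pose (k := kk r rho). assert (Hk : 0 <= k) by exact (Rlt_le _ _ (kk_pos r rho Hr Hrho)).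
  assert (HG : 0 < Gk k) by exact (G_pos _ (kk_pos r rho Hr Hrho)). rewrite psi_eq; auto. apply Rdiv_lt_0_compat; auto. apply J_pos; auto. Qed.

Lemma phi_mono (r rho m sigma : R) (Hr : 0 < r) (Hrho : 0 < rho) (Hs : 0 < sigma) z b : b <= z -> phi_hat r rho m sigma z <= phi_hat r rho m sigma b.
Proof.
  pose (k := kk r rho). assert (Hk : 0 <= k) by exact (Rlt_le _ _ (kk_pos r rho Hr Hrho)).
  assert (HG : 0 < Gk k) by exact (G_pos _ (kk_pos r rho Hr Hrho)).
  intro H. rewrite !phi_eq; auto. unfold Rdiv. apply Rmult_le_compat_r.
  left; apply Rinv_0_lt_compat; auto. apply J_le; auto.
  destruct H as [h|h]. left; apply Yf_lt; auto. subst; lra.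
Qed.

Lemma psi_mono (r rho m sigma : R) (Hr : 0 < r) (Hrho : 0 < rho) (Hs : 0 < sigma) z a : z <= a -> psi_hat r rho m sigma z <= psi_hat r rho m sigma a.
Proof.
  pose (k := kk r rho). assert (Hk : 0 <= k) by exact (Rlt_le _ _ (kk_pos r rho Hr Hrho)).
  assert (HG : 0 < Gk k) by exact (G_pos _ (kk_pos r rho Hr Hrho)).
  intro H. rewrite !psi_eq; auto. unfold Rdiv. apply Rmult_le_compat_r.
  left; apply Rinv_0_lt_compat; auto. apply J_le; auto.
  destruct H as [h|h]. assert (Yf rho m sigma z < Yf rho m sigma a) by (apply Yf_lt; auto). lra. subst; lra.
Qed.

Lemma ratio (r rho m sigma : R) (Hr : 0 < r) (Hrho : 0 < rho) (Hs : 0 < sigma) z w : z < w ->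
  m_hat' rho m sigma w * phi_hat r rho m sigma w * (m_hat' rho m sigma z * psi_hat r rho m sigma z) <
  m_hat' rho m sigma z * phi_hat r rho m sigma z * (m_hat' rho m sigma w * psi_hat r rho m sigma w).
Proof.
  pose (k := kk r rho). assert (Hk : 0 <= k) by exact (Rlt_le _ _ (kk_pos r rho Hr Hrho)).
  assert (HG : 0 < Gk k) by exact (G_pos _ (kk_pos r rho Hr Hrho)).
  intro H. rewrite !phi_eq, !psi_eq; auto. fold k.
  assert (HY := Yf_lt rho m sigma z w Hrho Hs H).
  assert (h1 := J_decr k _ _ Hk HY).
  assert (h2 : Jk k (- Yf rho m sigma z) < Jk k (- Yf rho m sigma w)) by (apply J_decr; auto; lra).
  assert (p1 := J_pos k (Yf rho m sigma w) Hk). assert (p2 := J_pos k (- Yf rho m sigma z) Hk).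
  assert (p3 := J_pos k (Yf rho m sigma z) Hk). assert (p4 := J_pos k (- Yf rho m sigma w) Hk).
  assert (Hm1 := m_pos rho m sigma z Hs). assert (Hm2 := m_pos rho m sigma w Hs).
  set (Jw := Jk k (Yf rho m sigma w)) in *. set (Jz := Jk k (Yf rho m sigma z)) in *.
  set (Iw := Jk k (- Yf rho m sigma w)) in *. set (Iz := Jk k (- Yf rho m sigma z)) in *.
  set (mz := m_hat' rho m sigma z) in *. set (mw := m_hat' rho m sigma w) in *.
  set (G := Gk k) in *.
  assert (HJ : Jw * Iz < Jz * Iw) by nra.
  set (c := mw * mz / (G * G)).
  assert (Hc : 0 < c) by (unfold c; apply Rdiv_lt_0_compat; nra).
  replace (mw * (Jw / G) * (mz * (Iz / G))) with (c * (Jw * Iz)) by (unfold c; field; lra).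
  replace (mz * (Jz / G) * (mw * (Iw / G))) with (c * (Jz * Iw)) by (unfold c; field; lra).
  apply Rmult_lt_compat_l; auto.
Qed.

Lemma tail_p (r rho m sigma : R) (Hr : 0 < r) (Hrho : 0 < rho) (Hs : 0 < sigma) b : ex_RInt_gen (fun z => m_hat' rho m sigma z * phi_hat r rho m sigma z) (at_point b) (Rbar_locally p_infty).
Proof.
  pose (k := kk r rho). assert (Hk : 0 <= k) by exact (Rlt_le _ _ (kk_pos r rho Hr Hrho)).
  assert (HG : 0 < Gk k) by exact (G_pos _ (kk_pos r rho Hr Hrho)).
  apply (IGR _ b (2 / sigma ^ 2 * exp (rho / sigma ^ 2 + 2 * rho * m / sigma ^ 2) * phi_hat r rho m sigma b)
                 (2 * rho / sigma ^ 2)).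
  - apply Rdiv_lt_0_compat. lra. apply pow_lt; lra.
  - intros z _. apply cont_multR. apply m_cont; auto. apply phi_cont; auto.
  - intros z Hz. assert (h1 := m_pos rho m sigma z Hs). assert (h2 := phi_pos r rho m sigma Hr Hrho Hs z).
    split. left; apply Rmult_lt_0_compat; auto.
    assert (h3 := m_bound_r rho m sigma z Hrho Hs). assert (h4 := phi_mono r rho m sigma Hr Hrho Hs z b Hz).
    set (E := 2 / sigma ^ 2 * exp (rho / sigma ^ 2 + 2 * rho * m / sigma ^ 2)) in *.
    set (F := exp (- (2 * rho / sigma ^ 2) * z)) in *.
    replace (E * phi_hat r rho m sigma b * F) with ((E * F) * phi_hat r rho m sigma b) by ring.
    apply Rmult_le_compat; lra.
Qed.

Lemma tail_q (r rho m sigma : R) (Hr : 0 < r) (Hrho : 0 < rho) (Hs : 0 < sigma) a : ex_RInt_gen (fun z => m_hat' rho m sigma z * psi_hat r rho m sigma z) (Rbar_locally m_infty) (at_point a).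
Proof.
  pose (k := kk r rho). assert (Hk : 0 <= k) by exact (Rlt_le _ _ (kk_pos r rho Hr Hrho)).
  assert (HG : 0 < Gk k) by exact (G_pos _ (kk_pos r rho Hr Hrho)).
  apply (IGL _ a (2 / sigma ^ 2 * exp (rho / sigma ^ 2 - 2 * rho * m / sigma ^ 2) * psi_hat r rho m sigma a)
                 (2 * rho / sigma ^ 2)).
  - apply Rdiv_lt_0_compat. lra. apply pow_lt; lra.
  - intros z _. apply cont_multR. apply m_cont; auto. apply psi_cont; auto.
  - intros z Hz. assert (h1 := m_pos rho m sigma z Hs). assert (h2 := psi_pos r rho m sigma Hr Hrho Hs z).
    split. left; apply Rmult_lt_0_compat; auto.
    assert (h3 := m_bound_l rho m sigma z Hrho Hs). assert (h4 := psi_mono r rho m sigma Hr Hrho Hs z a Hz).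
    set (E := 2 / sigma ^ 2 * exp (rho / sigma ^ 2 - 2 * rho * m / sigma ^ 2)) in *.
    set (F := exp (- - (2 * rho / sigma ^ 2) * z)) in *.
    replace (E * psi_hat r rho m sigma a * F) with ((E * F) * psi_hat r rho m sigma a) by ring.
    apply Rmult_le_compat; lra.
Qed.



Theorem proposition4p4 :
  forall r rho m sigma c1 c2 : R,
    0 < r -> 0 < rho -> 0 < sigma -> 0 < c1 + c2 ->
    forall theta1 theta2 a1 b1 a2 b2 : R,
      theta1 < theta2 ->
      optimal_boundaries r rho m sigma c1 c2 theta1 a1 b1 ->
      optimal_boundaries r rho m sigma c1 c2 theta2 a2 b2 ->
      a1 < a2 /\ b1 < b2.
Proof.
  intros r rho m sigma c1 c2 Hr Hrho Hs Hc th1 th2 a1 b1 a2 b2 Hth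
    [h1 [h2 [h3 [h4 h5]]]] [g1 [g2 [g3 [g4 g5]]]].
  assert (HK : 0 < (r + rho) * (c1 + c2)) by (apply Rmult_lt_0_compat; lra).
  apply (core (fun z => m_hat' rho m sigma z * phi_hat r rho m sigma z)
              (fun z => m_hat' rho m sigma z * psi_hat r rho m sigma z)
              ((r + rho) * (c1 + c2)) (th1 - (r + rho) * c1) (th2 - (r + rho) * c1) a1 b1 a2 b2).
  - intro z. apply cont_multR. apply m_cont; auto. apply phi_cont; auto.
  - intro z. apply cont_multR. apply m_cont; auto. apply psi_cont; auto.
  - intro z. apply Rmult_lt_0_compat. apply m_pos; auto. apply phi_pos; auto.
  - intro z. apply Rmult_lt_0_compat. apply m_pos; auto. apply psi_pos; auto.
  - intros z w H. apply ratio; auto.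
  - apply tail_p; auto.
  - apply tail_q; auto.
  - exact HK.
  - nra.
  - exact h1.
  - exact h2.
  - nra.
  - exact g1.
  - exact g2.
  - nra.
  - rewrite (RInt_extR _ (fun z => (z - th1 + (r + rho) * c1) * m_hat' rho m sigma z * phi_hat r rho m sigma z)).
    rewrite h4. simpl. ring. intros; ring.
  - rewrite (RInt_extR _ (fun z => (z - th1 - (r + rho) * c2) * m_hat' rho m sigma z * psi_hat r rho m sigma z)).
    rewrite h5. simpl. ring. intros; ring.
  - rewrite (RInt_extR _ (fun z => (z - th2 + (r + rho) * c1) * m_hat' rho m sigma z * phi_hat r rho m sigma z)).
    rewrite g4. simpl. ring. intros; ring.
  - rewrite (RInt_extR _ (fun z => (z - th2 - (r + rho) * c2) * m_hat' rho m sigma z * psi_hat r rho m sigma z)).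
    rewrite g5. simpl. ring. intros; ring.
Qed.
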